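(* Let $\ell,d,e$ be nonnegative integers with $e\ge d+m(q-1)$ and $\ell\le m$. Suppose $\mu\in\overline{\mathbb{M}}_d\cap\mathbb{F}_q[x_0,\dots,x_\ell]$ and $\nu\in\overline{\mathbb{M}}^{(\ell)}_e$. Then $\mu\mid\nu$ if and only if $\sigma^{(\ell)}(\mu)\mid\sigma^{(\ell)}(\nu)$.
   Context: $q$ is a prime power, $m$ a positive integer. A monomial $\mu\neq1$ in $x_0,\dots,x_m$ written $x_0^{a_0}\cdots x_k^{a_k}$ with $a_k>0$ is projectively reduced if $a_0,\dots,a_{k-1}\le q-1$; $1$ is projectively reduced. $\overline{\mathbb{M}}$ is the set of projectively reduced monomials and $\overline{\mathbb{M}}_e$ those of degree $e$. $\overline{\mathbb{M}}^{(0)}=\{x_0^a:a\ge0\}$ and for $1\le\ell\le m$, $\overline{\mathbb{M}}^{(\ell)}=\{x_0^{a_0}\cdots x_\ell^{a_\ell}\in\overline{\mathbb{M}}:a_\ell>0\}$; $\overline{\mathbb{M}}^{(\ell)}_e=\overline{\mathbb{M}}^{(\ell)}\cap\overline{\mathbb{M}}_e$. The specialization map $\sigma^{(\ell)}:\overline{\mathbb{M}}\to\overline{\mathbb{M}}\cup\{0\}$ sends $x_0^{a_0}\cdots x_{\ell-1}^{a_{\ell-1}}x_\ell^{a_\ell}$ to $x_0^{a_0}\cdots x_{\ell-1}^{a_{\ell-1}}$ and sends monomials not in $\mathbb{F}_q[x_0,\dots,x_\ell]$ to $0$ (empty products equal $1$). *)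

(* Defs.v *)
From mathcomp Require Import all_boot.
Set Implicit Arguments. Unset Strict Implicit. Unset Printing Implicit Defensive.

(* A monomial x_0^{a_0} ... x_m^{a_m} in the variables x_0,...,x_m is
   represented by its exponent vector a : 'I_(m.+1) -> nat. *)
Definition monomial (m : nat) := {ffun 'I_m.+1 -> nat}.

Definition mdeg (m : nat) (a : monomial m) : nat := \sum_(i < m.+1) a i.

Definition mdiv (m : nat) (a b : monomial m) : Prop := forall i, a i <= b i.

Definition in_vars (m l : nat) (a : monomial m) : Prop :=
  forall i : 'I_m.+1, l < i -> a i = 0.

Definition proj_reduced (q m : nat) (a : monomial m) : Prop :=
  (forall i, a i = 0) \/
  exists k : 'I_m.+1, [/\ 0 < a k, in_vars k a &
                         forall j : 'I_m.+1, j < k -> a j <= q - 1].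

Definition PRdeg (q m e : nat) (a : monomial m) : Prop :=
  proj_reduced q a /\ mdeg a = e.

Definition PRlevel (q m l : nat) (a : monomial m) : Prop :=
  if l is 0 then in_vars 0 a
  else [/\ proj_reduced q a, in_vars l a & exists i : 'I_m.+1, (i : nat) = l /\ 0 < a i].

(* specialization map sigma^(l); None stands for the zero polynomial *)
Definition sigma (m l : nat) (a : monomial m) : option (monomial m) :=
  if [forall i : 'I_m.+1, (l < i) ==> (a i == 0)]
  then Some [ffun i : 'I_m.+1 => if (i : nat) == l then 0 else a i]
  else None.

Definition odiv (m : nat) (a b : option (monomial m)) : Prop :=
  match a, b with
  | _, None => True
  | None, Some _ => False
  | Some a, Some b => mdiv a b
  end.

Definition prime_power (q : nat) : Prop := exists p k, prime p /\ 0 < k /\ q = p ^ k.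

(* Main.v *)
Require Import Defs.
From mathcomp Require Import all_boot.

Theorem proposition4p1 (q m l d e : nat) (mu nu : monomial m) :
  prime_power q -> 0 < m ->
  d + m * (q - 1) <= e -> l <= m ->
  PRdeg q d mu -> in_vars l mu ->
  PRlevel q l nu -> mdeg nu = e ->
  (mdiv mu nu <-> odiv (sigma l mu) (sigma l nu)).
Proof.
move=> _ _ He Hlm [_ Hdmu] Hmu Hnu Hdnu.
have lm1 : l < m.+1 by [].
pose L := Ordinal lm1.
have Hnuv : in_vars l nu.
  by case: l Hlm lm1 L Hmu Hnu => [|l] //= _ _ _ _ [].
have Hb' : forall i : 'I_m.+1, (i : nat) != l -> nu i <= q - 1.
  move: Hnu; case: l Hlm lm1 L Hmu Hnuv => [|l] Hlm lm1 L Hmu Hnuv.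
    by move=> _ i ne; rewrite Hnuv // lt0n.
  move=> [[Hz|[k [Hk Hkv Hkb]]] _ [i0 [Hi0 Hpos]]].
    by rewrite Hz in Hpos.
  move=> i ne.
  have lk : l.+1 <= k.
    rewrite leqNgt; apply/negP => kl.
    by move: Hpos; rewrite Hkv // Hi0.
  case: (ltngtP i l.+1) => [il|li|il].
  - by apply: Hkb; apply: leq_trans lk.
  - by rewrite Hnuv.
  - by rewrite il eqxx in ne.
have Hb : forall i, i != L -> nu i <= q - 1.
  move=> i ne; apply: Hb'; apply: contra ne => /eqP h; apply/eqP; exact: val_inj.
have sig : forall a : monomial m, in_vars l a ->
   sigma l a = Some [ffun i : 'I_m.+1 => if (i : nat) == l then 0 else a i].
  move=> a Ha; rewrite /sigma.
  have -> : [forall i : 'I_m.+1, (l < i) ==> (a i == 0)] = true.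
    by apply/forallP => i; apply/implyP => /Ha ->.
  by [].
rewrite (sig _ Hmu) (sig _ Hnuv) /=.
split.
  by move=> H i; rewrite !ffunE; case: ifP.
move=> H i; case: (eqVneq i L) => [->|ne]; last first.
  have := H i; rewrite !ffunE.
  have -> : ((i : nat) == l) = false.
    by apply/negbTE; apply: contra ne => /eqP Hi; apply/eqP; apply: val_inj.
  by [].
have h1 : mu L <= d.
  by rewrite -Hdmu /mdeg (bigD1 L) //= leq_addr.
have h2 : \sum_(i < m.+1 | i != L) nu i <= m * (q - 1).
  apply: leq_trans (_ : \sum_(i < m.+1 | i != L) (q - 1) <= _).
    by apply: leq_sum => j; apply: Hb.
  rewrite sum_nat_const.
  have -> : #|[pred i : 'I_m.+1 | i != L]| = m.
    by have := cardC1 L; rewrite card_ord.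
  by [].
have h3 : e = nu L + \sum_(i < m.+1 | i != L) nu i.
  by rewrite -Hdnu /mdeg (bigD1 L).
apply: leq_trans h1 _.
have : d + m * (q - 1) <= nu L + m * (q - 1).
  apply: leq_trans He _; rewrite h3 leq_add2l; exact: h2.
by rewrite leq_add2r.
Qed.
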